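(* Let $L$ be a finite-dimensional Lie algebra over an arbitrary field $F$. Let $U$ be a core-free subalgebra of $L$ such that $\langle u,z\rangle$ is either two-dimensional or a $\mu$-algebra for every $0\ne u\in U$ and $z\in L\setminus U$. Then one of the following holds: (i) $L$ is almost abelian; (ii) $\langle u,z\rangle$ is a $\mu$-algebra for every $0\ne u\in U$ and $z\in L\setminus U$; (iii) $F$ has characteristic two and there is an isomorphism $L\cong K$ carrying $U$ onto $Fc$.
   Context: $K$ denotes the three-dimensional Lie algebra with basis $a,b,c$ and products $[a,b]=c$, $[b,c]=b$, $[a,c]=a$. $\langle u,z\rangle$ denotes the subalgebra generated by $u,z$. The core of $U$ is the largest ideal of $L$ contained in $U$; $U$ is core-free if its core is $0$. A $\mu$-algebra is a non-solvable Lie algebra in which every proper subalgebra is one-dimensional. $L$ is almost abelian if $L=L^2\oplus Fx$ for some $x$, where $L^2=[L,L]$ is abelian and $\mathrm{ad}\,x$ acts as the identity map on $L^2$. *)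

(* Defs.v *)
From HB Require Import structures.
From mathcomp Require Import all_boot all_order all_algebra.
Set Implicit Arguments. Unset Strict Implicit. Unset Printing Implicit Defensive.
Import Order.TTheory GRing.Theory Num.Theory.
Local Open Scope ring_scope.

Section Lie.
Variables (F : fieldType) (V : vectType F) (br : V -> V -> V).

Definition is_lie : Prop :=
  [/\ (forall a x y z, br (a *: x + y) z = a *: br x z + br y z),
      (forall a x y z, br z (a *: x + y) = a *: br z x + br z y),
      (forall x, br x x = 0) &
      (forall x y z, br x (br y z) + br y (br z x) + br z (br x y) = 0)].

Definition brk (A B : {vspace V}) : {vspace V} :=
  (<< [seq br x y | x <- vbasis A, y <- vbasis B] >>)%VS.

Definition subalg (S : {vspace V}) : Prop :=
  forall x y, x \in S -> y \in S -> br x y \in S.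

Definition ideal (I : {vspace V}) : Prop :=
  forall x y, y \in I -> br x y \in I.

Definition core_free (U : {vspace V}) : Prop :=
  forall I, ideal I -> (I <= U)%VS -> I = 0%VS.

(* subalgebra generated by u and z: close <[u]> + <[z]> under brackets;
   the increasing chain stabilises after at most dim L steps *)
Definition gen_step (S : {vspace V}) : {vspace V} := (S + brk S S)%VS.
Definition gen (u z : V) : {vspace V} :=
  iter (\dim (fullv : {vspace V})) gen_step (<[u]> + <[z]>)%VS.

Definition derived (S : {vspace V}) (n : nat) : {vspace V} :=
  iter n (fun T => brk T T) S.
Definition solvable (S : {vspace V}) : Prop := exists n, derived S n = 0%VS.

Definition mu_alg (S : {vspace V}) : Prop :=
  ~ solvable S /\
  forall T : {vspace V}, subalg T -> (T <= S)%VS -> T != S -> T != 0%VS ->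
    \dim T = 1%N.

Definition almost_abelian : Prop :=
  let L2 := brk fullv fullv in
  exists x : V,
    [/\ (L2 :&: <[x]> = 0)%VS, (L2 + <[x]> = fullv)%VS,
        (forall y w, y \in L2 -> w \in L2 -> br y w = 0) &
        (forall y, y \in L2 -> br x y = y)].
End Lie.

(* The Lie algebra K on F^3 with basis a, b, c:
   [a,b] = c, [b,c] = b, [a,c] = a *)
Section K.
Variable F : fieldType.
Definition Ka : 'rV[F]_3 := \row_(j < 3) ((j : nat) == 0%N)%:R.
Definition Kb : 'rV[F]_3 := \row_(j < 3) ((j : nat) == 1%N)%:R.
Definition Kc : 'rV[F]_3 := \row_(j < 3) ((j : nat) == 2%N)%:R.
Definition i0 : 'I_3 := @Ordinal 3 0 isT.
Definition i1 : 'I_3 := @Ordinal 3 1 isT.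
Definition i2 : 'I_3 := @Ordinal 3 2 isT.
Definition Kbr (x y : 'rV[F]_3) : 'rV[F]_3 :=
  (x ord0 i0 * y ord0 i2 - x ord0 i2 * y ord0 i0) *: Ka
  + (x ord0 i1 * y ord0 i2 - x ord0 i2 * y ord0 i1) *: Kb
  + (x ord0 i0 * y ord0 i1 - x ord0 i1 * y ord0 i0) *: Kc.
End K.

(* Main.v *)
Require Import Defs.
From HB Require Import structures.
From mathcomp Require Import all_boot all_order all_algebra.
From Stdlib Require Import Classical Ring.
Import GRing.Theory.
Local Open Scope ring_scope.
Set Implicit Arguments. Unset Strict Implicit.

Definition fadd (F : fieldType) (x y : F) : F := x + y.
Definition fmul (F : fieldType) (x y : F) : F := x * y.
Definition fopp (F : fieldType) (x : F) : F := - x.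
Definition fsub (F : fieldType) (x y : F) : F := x - y.
Definition fzero (F : fieldType) : F := 0.
Definition fone (F : fieldType) : F := 1.
Lemma Fth (F : fieldType) : @ring_theory F (fzero F) (fone F) (@fadd F) (@fmul F) (@fsub F) (@fopp F) eq.
Proof. rewrite /fadd /fmul /fsub /fopp /fzero /fone. split=> //; [exact: add0r|exact: addrC|exact: addrA|exact: mul1r|exact: mulrC|exact: mulrA|exact: mulrDl|exact: subrr]. Qed.

Ltac tof F := repeat match goal with
  | |- context [@Algebra.add ?M ?x ?y] => change (@Algebra.add M x y) with (@fadd F x y)
  | |- context [@GRing.mul ?M ?x ?y] => change (@GRing.mul M x y) with (@fmul F x y)
  | |- context [@Algebra.opp ?M ?x] => change (@Algebra.opp M x) with (@fopp F x)
  | |- context [@Algebra.zero ?M] => change (@Algebra.zero M) with (fzero F)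
  | |- context [@GRing.one ?M] => change (@GRing.one M) with (fone F)
  end; match goal with |- @eq _ ?a ?b => change (@eq (GRing.Field.sort F) a b) end.

Inductive vexp (F : fieldType) := VA of nat | VD of vexp F & vexp F | VN of vexp F
  | VS of F & vexp F | V0.

Section VR.
Variables (F : fieldType) (V : lmodType F).
Fixpoint veval (env : seq V) (e : vexp F) : V :=
  match e with VA i => nth 0 env i | VD a b => veval env a + veval env b
  | VN a => - veval env a | VS c a => c *: veval env a | V0 => 0 end.
Fixpoint vnf (e : vexp F) (j : nat) : F :=
  match e with VA i => if i == j then 1 else 0 | VD a b => vnf a j + vnf b j
  | VN a => - vnf a j | VS c a => c * vnf a j | V0 => 0 end.

Lemma veval_nf (env : seq V) e :
  veval env e = \sum_(i < size env) vnf e i *: nth 0 env i.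
Proof.
elim: e => [i|a IHa b IHb|a IHa|c a IHa|] /=.
- case: (ltnP i (size env)) => hi.
    rewrite (bigD1 (Ordinal hi)) //= eqxx scale1r big1 ?addr0 // => j hj.
    have -> : (i == j) = false by apply: contraNF hj => /eqP e; apply/eqP/val_inj.
    by rewrite scale0r.
  rewrite nth_default // big1 // => j _.
  have -> : (i == j) = false by apply/eqP => e; move: (ltn_ord j); rewrite -e ltnNge hi.
  by rewrite scale0r.
- by rewrite IHa IHb -big_split /=; apply: eq_bigr => j _; rewrite scalerDl.
- by rewrite IHa -sumrN; apply: eq_bigr => j _; rewrite scaleNr.
- by rewrite IHa scaler_sumr; apply: eq_bigr => j _; rewrite scalerA.
- by rewrite big1 // => j _; rewrite scale0r.
Qed.

Lemma vsolve (env : seq V) e1 e2 :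
  (forall j, (j < size env)%N -> vnf e1 j = vnf e2 j) -> veval env e1 = veval env e2.
Proof. by move=> H; rewrite !veval_nf; apply: eq_bigr => j _; rewrite H. Qed.
End VR.

Ltac vindex t l :=
  match l with
  | (t :: _)%SEQ => constr:(0%N)
  | (_ :: ?l')%SEQ => let n := vindex t l' in constr:(S n)
  end.

Ltac vreify F t l :=
  match t with
  | @Algebra.add _ ?a ?b => let x := vreify F a l in let y := vreify F b l in constr:(@VD F x y)
  | @Algebra.opp _ ?a => let x := vreify F a l in constr:(@VN F x)
  | @GRing.scale _ _ ?c ?a => let x := vreify F a l in constr:(@VS F c x)
  | @Algebra.zero _ => constr:(@V0 F)
  | _ => let n := vindex t l in constr:(@VA F n)
  end.

Ltac vring F l :=
  match goal with |- @eq _ ?a ?b =>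
    let x := vreify F a l in let y := vreify F b l in
    change (veval l x = veval l y); apply: vsolve;
    case=> [|[|[|[|[|[|?]]]]]] ?; simpl; tof F; ring
  end.



Section Ids.
Variables (F : fieldType) (V : lmodType F).
Add Ring FringI : (Fth F).
Implicit Types (a b c d e l : F) (x y z m u w : V).

Lemma use_eq (X Y P Q : V) : X = Y -> P - Q = X - Y -> P = Q.
Proof. by move=> -> h; apply/eqP; rewrite -subr_eq0 h subrr. Qed.

Lemma use_eqN (X Y P Q : V) : X = Y -> P - Q = Y - X -> P = Q.
Proof. by move=> -> h; apply/eqP; rewrite -subr_eq0 h subrr. Qed.

Lemma addKr' x y : x + y - x = y.
Proof. by rewrite addrC addKr. Qed.

Lemma idA1 a b c z m u :
  a *: (z + m) + b *: u - (a *: z + c *: u) = a *: m + (b - c) *: u.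
Proof. vring F [:: z; m; u]. Qed.

Lemma idA2 a a1 b b1 z m u :
  (a - a1) *: z = a *: (z + m) + b *: u - (a1 *: z + b1 *: u) - a *: m - (b - b1) *: u.
Proof. vring F [:: z; m; u]. Qed.

Lemma idA3 a1 b1 z m u (X : V) :
  X - (a1 *: z + b1 *: u) - a1 *: m = X - a1 *: (z + m) - b1 *: u.
Proof. vring F [:: z; m; u; X]. Qed.

Lemma idK1 a1 a2 b1 b2 c z y u (Y : V) :
  a2 *: (c *: z + y) + b2 *: u = c *: (a1 *: z + b1 *: u) + Y ->
  (c * (a2 - a1)) *: z = c *: (b1 *: u) + Y - a2 *: y - b2 *: u.
Proof. move=> E; apply: (use_eq E); vring F [:: z; y; u; Y]. Qed.

Lemma idK2 a1 a2 a3 b1 b2 b3 z1 z2 u :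
  a1 *: z1 + b1 *: u + (a2 *: z2 + b2 *: u) = a3 *: (z1 + z2) + b3 *: u ->
  (a1 - a3) *: z1 = - ((a2 - a3) *: z2) + (b3 - b1 - b2) *: u.
Proof. move=> E; apply: (use_eq E); vring F [:: z1; z2; u]. Qed.

Lemma idS l (A B z z0 : V) :
  A + B - (l *: z + l *: z0) - (B - l *: z0) = A - l *: z.
Proof. vring F [:: A; B; z; z0]. Qed.

Lemma idL a l (P Q R S : V) : a *: P + Q - (a *: (l *: R) + l *: S) = a *: (P - l *: R) + (Q - l *: S).
Proof. vring F [:: P; Q; R; S]. Qed.
End Ids.

Section Basic.
Variables (F : fieldType) (V : vectType F) (br : V -> V -> V).
Hypothesis hL : is_lie br.

Lemma brlin a x y z : br (a *: x + y) z = a *: br x z + br y z.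
Proof. by case: hL. Qed.
Lemma brlinr a x y z : br z (a *: x + y) = a *: br z x + br z y.
Proof. by case: hL. Qed.
Lemma brxx x : br x x = 0.
Proof. by case: hL. Qed.
Lemma jacobi x y z : br x (br y z) + br y (br z x) + br z (br x y) = 0.
Proof. by case: hL. Qed.

Lemma br0l z : br 0 z = 0.
Proof.
have := brlin 1 0 0 z; rewrite !scale1r addr0 => H.
by apply: (@addrI _ (br 0 z)); rewrite addr0 -H.
Qed.
Lemma br0r z : br z 0 = 0.
Proof.
have := brlinr 1 0 0 z; rewrite !scale1r addr0 => H.
by apply: (@addrI _ (br z 0)); rewrite addr0 -H.
Qed.
Lemma brDl x y z : br (x + y) z = br x z + br y z.
Proof. by rewrite -{1}[x]scale1r brlin scale1r. Qed.
Lemma brDr x y z : br z (x + y) = br z x + br z y.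
Proof. by rewrite -{1}[x]scale1r brlinr scale1r. Qed.
Lemma brZl a x z : br (a *: x) z = a *: br x z.
Proof. by rewrite -[a *: x]addr0 brlin br0l !addr0. Qed.
Lemma brZr a x z : br z (a *: x) = a *: br z x.
Proof. by rewrite -[a *: x]addr0 brlinr br0r !addr0. Qed.
Lemma brNl x z : br (- x) z = - br x z.
Proof. by rewrite -scaleN1r brZl scaleN1r. Qed.
Lemma brNr x z : br z (- x) = - br z x.
Proof. by rewrite -scaleN1r brZr scaleN1r. Qed.
Lemma brBl x y z : br (x - y) z = br x z - br y z.
Proof. by rewrite brDl brNl. Qed.
Lemma brBr x y z : br z (x - y) = br z x - br z y.
Proof. by rewrite brDr brNr. Qed.
Lemma brC x y : br x y = - br y x.
Proof.
have := brxx (x + y); rewrite brDl !brDr !brxx add0r addr0 => /eqP.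
by rewrite addr_eq0 => /eqP.
Qed.

Lemma br_suml (I : Type) (r : seq I) (P : pred I) (f : I -> V) z :
  br (\sum_(i <- r | P i) f i) z = \sum_(i <- r | P i) br (f i) z.
Proof.
elim/big_rec2: _ => [|i y1 y2 _ <-]; first by rewrite br0l.
by rewrite brDl.
Qed.
Lemma br_sumr (I : Type) (r : seq I) (P : pred I) (f : I -> V) z :
  br z (\sum_(i <- r | P i) f i) = \sum_(i <- r | P i) br z (f i).
Proof.
elim/big_rec2: _ => [|i y1 y2 _ <-]; first by rewrite br0r.
by rewrite brDr.
Qed.

Lemma brk_sub (A B C : {vspace V}) :
  (forall a b, a \in A -> b \in B -> br a b \in C) -> (brk br A B <= C)%VS.
Proof.
move=> H; apply/span_subvP => w /allpairsP [[x y] [/= hx hy ->]].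
by apply: H; apply: vbasis_mem.
Qed.

Lemma mem_brk (A B : {vspace V}) a b : a \in A -> b \in B -> br a b \in brk br A B.
Proof.
move=> ha hb; rewrite (coord_vbasis ha) br_suml; apply: memv_suml => i _.
rewrite brZl; apply: memvZ.
rewrite (coord_vbasis hb) br_sumr; apply: memv_suml => j _.
rewrite brZr; apply: memvZ; apply: memv_span.
apply/allpairsP; exists ((vbasis A)`_i, (vbasis B)`_j) => /=.
by split=> //; apply: mem_nth; rewrite size_tuple.
Qed.

End Basic.

Section Gen.
Variables (F : fieldType) (V : vectType F) (br : V -> V -> V).
Hypothesis hL : is_lie br.

Local Notation step := (gen_step br).
Local Notation it k S := (iter k step S).

Lemma step_sub S : (S <= step S)%VS.
Proof. exact: addvSl. Qed.

Lemma it_mono S i j : (i <= j)%N -> (it i S <= it j S)%VS.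
Proof.
move=> /subnK <-; elim: (j - i)%N => [|d IH]; first by rewrite add0n subvv.
by rewrite addSn /=; apply: subv_trans IH (step_sub _).
Qed.

Lemma it_stab S j d : it j S = it j.+1 S -> it (d + j) S = it j S.
Proof.
move=> H; elim: d => [|d IH] //.
by rewrite addSn /= IH; exact: esym H.
Qed.

Lemma it_grow S k : (exists2 j, (j < k)%N & it j S = it j.+1 S) \/ (k <= \dim (it k S))%N.
Proof.
elim: k => [|k [[j hj e]|hk]]; first by right.
- by left; exists j => //; apply: ltnW.
- case: (eqVneq (it k S) (it k.+1 S)) => e; first by left; exists k.
  right; rewrite /= in e *.
  have lt : (\dim (it k S) < \dim (step (it k S)))%N.
    by rewrite (ltn_leqif (dimv_leqif_eq (step_sub (it k S)))) e.
  exact: leq_ltn_trans hk lt.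
Qed.

Lemma gen_fix u z : step (gen br u z) = gen br u z.
Proof.
rewrite /gen; set n := \dim (fullv : {vspace V}).
have [[j hj e]|hk] := it_grow (<[u]> + <[z]>)%VS n.+1.
- have e1 := it_stab (n - j)%N e; have e2 := it_stab (n.+1 - j)%N e.
  rewrite (subnK (hj : (j <= n)%N)) in e1; rewrite (subnK (ltnW hj)) in e2.
  by move: e2; rewrite /= e1.
- by have := leq_trans hk (dimvS (subvf _)); rewrite ltnn.
Qed.

Lemma gen_subalg u z : subalg br (gen br u z).
Proof.
move=> a b ha hb; have := gen_fix u z; rewrite /gen_step => /addv_idPl H.
exact: (subvP H) (mem_brk hL ha hb).
Qed.

Lemma gen_base u z : (<[u]> + <[z]> <= gen br u z)%VS.
Proof. exact: (it_mono _ (leq0n _)). Qed.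

Lemma gen_u u z : u \in gen br u z.
Proof. exact: (subvP (gen_base u z)) _ (subvP (addvSl _ _) _ (memv_line u)). Qed.
Lemma gen_z u z : z \in gen br u z.
Proof. exact: (subvP (gen_base u z)) _ (subvP (addvSr _ _) _ (memv_line z)). Qed.

Lemma gen_min (S : {vspace V}) u z : subalg br S -> u \in S -> z \in S ->
  (gen br u z <= S)%VS.
Proof.
move=> hS hu hz; rewrite /gen; elim: (\dim _) => [|k IH] /=.
  by rewrite subv_add; apply/andP; split; rewrite -memvE.
rewrite /gen_step subv_add IH /=; apply: brk_sub => a b ha hb.
by apply: hS; [apply: (subvP IH) | apply: (subvP IH)].
Qed.

End Gen.

Section Mu.
Variables (F : fieldType) (V : vectType F) (br : V -> V -> V).
Hypothesis hL : is_lie br.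

Lemma br_span2 x y a b : a \in (<[x]> + <[y]>)%VS -> b \in (<[x]> + <[y]>)%VS ->
  br a b \in <[br x y]>%VS.
Proof.
move=> /memv_addP [a1 /vlineP [k1 ->] [a2 /vlineP [k2 ->] ->]].
move=> /memv_addP [b1 /vlineP [l1 ->] [b2 /vlineP [l2 ->] ->]].
rewrite !(brDl hL, brDr hL, brZl hL, brZr hL) !(brxx hL) !scaler0 add0r addr0.
rewrite (brC hL y x) !scalerN.
by apply: memvD; rewrite ?memvN; do ?apply: memvZ; apply: memv_line.
Qed.

Lemma sub2 x y : br x y \in (<[x]> + <[y]>)%VS -> subalg br (<[x]> + <[y]>)%VS.
Proof.
move=> h a b ha hb; have := br_span2 ha hb.
by move: h; rewrite !memvE => h1 h2; apply: subv_trans h2 h1.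
Qed.

Lemma dim2 (x y : V) : x != 0 -> y \notin <[x]>%VS -> \dim (<[x]> + <[y]>)%VS = 2%N.
Proof.
move=> hx hy.
have hy0 : y != 0 by apply: contra hy => /eqP ->; exact: mem0v.
have cap0 : (<[x]> :&: <[y]> = 0)%VS.
  apply/eqP; rewrite -subv0; apply/subvP => w /memv_capP [wx /vlineP [k ek]].
  rewrite memv0; case: (eqVneq k 0) => [k0|kn0]; first by rewrite ek k0 scale0r.
  have : y \in <[x]>%VS by rewrite -[y]scale1r -(mulVf kn0) -scalerA -ek memvZ.
  by rewrite (negbTE hy).
have := dimv_sum_cap <[x]> <[y]>; rewrite cap0 dimv0 addn0 !dim_vline hx hy0.
by [].
Qed.

Lemma solv2 (S : {vspace V}) : (\dim S <= 2)%N -> solvable br S.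
Proof.
move=> hS; set X := vbasis S; set x := X`_0; set y := X`_1.
have SX : (S <= <[x]> + <[y]>)%VS.
  rewrite -{1}(span_basis (vbasisP S)); apply/span_subvP => v /(nthP 0) [i hi <-].
  move: hi; rewrite size_tuple => hi.
  case: i hi => [|[|i]] hi.
  - by apply: (subvP (addvSl _ _)); apply: memv_line.
  - by apply: (subvP (addvSr _ _)); apply: memv_line.
  - by move: (leq_trans hi hS).
have h1 : (brk br S S <= <[br x y]>)%VS.
  apply: brk_sub => a b ha hb; apply: br_span2; [exact: (subvP SX) | exact: (subvP SX)].
exists 2%N; rewrite /derived /=; apply/eqP; rewrite -subv0.
apply: brk_sub => a b /(subvP h1) /vlineP [k ->] /(subvP h1) /vlineP [l ->].
by rewrite (brZl hL) (brZr hL) (brxx hL) !scaler0 mem0v.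
Qed.

Lemma mu_dim3 (M : {vspace V}) : mu_alg br M -> (3 <= \dim M)%N.
Proof.
move=> [ns _]; rewrite leqNgt; apply/negP => h; apply: ns; apply: solv2.
by rewrite -ltnS.
Qed.

Lemma mu_big (M T : {vspace V}) : mu_alg br M -> subalg br T -> (T <= M)%VS ->
  (2 <= \dim T)%N -> T = M.
Proof.
move=> [_ H] hT sTM dT; apply/eqP; apply/negPn/negP => ne.
have T0 : T != 0%VS by rewrite -dimv_eq0 -lt0n (leq_trans _ dT).
by move: (H T hT sTM ne T0) dT => ->.
Qed.

Lemma bprime (M : {vspace V}) (u m : V) : mu_alg br M -> u \in M -> u != 0 ->
  m \in M -> m \notin <[u]>%VS -> br u m \in (<[u]> + <[m]>)%VS -> False.
Proof.
move=> hM hu u0 hm mu hb.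
have e : (<[u]> + <[m]>)%VS = M.
  apply: mu_big hM (sub2 hb) _ _; last by rewrite dim2.
  by rewrite subv_add -!memvE hu hm.
by have := mu_dim3 hM; rewrite -e dim2.
Qed.

End Mu.

Section Steps.
Variables (F : fieldType) (V : vectType F) (br : V -> V -> V).
Hypothesis hL : is_lie br.

Definition Pz (u z : V) := exists a b, br u z = a *: z + b *: u.

Lemma notin_line (U : {vspace V}) (u w : V) : u \in U -> w \notin U -> w \notin <[u]>%VS.
Proof. by move=> hu; apply: contra => /vlineP [k ->]; apply: memvZ. Qed.

Lemma Pz_mem u z : Pz u z -> br u z \in (<[u]> + <[z]>)%VS.
Proof.
move=> [a [b E]]; rewrite E addrC; apply: memv_add; apply: memvZ; apply: memv_line.
Qed.

Lemma Pz_of_dim2 (U : {vspace V}) u z : u \in U -> u != 0 -> z \notin U ->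
  \dim (gen br u z) = 2%N -> Pz u z.
Proof.
move=> hu u0 hz d2.
have d := dim2 u0 (notin_line hu hz).
have e : gen br u z = (<[u]> + <[z]>)%VS.
  by apply/eqP; rewrite eq_sym eqEdim gen_base d2 d.
have := gen_subalg hL (gen_u br u z) (gen_z br u z).
rewrite e => /memv_addP [p /vlineP [b ->] [q /vlineP [a ->] E]].
by exists a, b; rewrite E addrC.
Qed.

Lemma capU (U : {vspace V}) u z m : subalg br U -> u \in U -> u != 0 -> z \notin U ->
  mu_alg br (gen br u z) -> m \in gen br u z -> m \in U -> m \in <[u]>%VS.
Proof.
move=> hU hu u0 hz hM hm hmU; set M := gen br u z in hM hm *.
have sT : subalg br (M :&: U)%VS.
  move=> a b /memv_capP [aM aU] /memv_capP [bM bU]; rewrite memv_cap.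
  by rewrite (gen_subalg hL aM bM) (hU _ _ aU bU).
have hne : (M :&: U)%VS != M.
  apply/eqP => e; have := gen_z br u z; rewrite -/M -e memv_cap => /andP [_].
  by rewrite (negbTE hz).
have hn0 : (M :&: U)%VS != 0%VS.
  apply/eqP => e; have : u \in (M :&: U)%VS by rewrite memv_cap gen_u hu.
  by rewrite e memv0 (negbTE u0).
have d1 := hM.2 _ sT (capvSl _ _) hne hn0.
have e : <[u]>%VS = (M :&: U)%VS.
  by apply/eqP; rewrite eqEdim d1 dim_vline u0 leqnn andbT -memvE memv_cap gen_u hu.
by rewrite e memv_cap hm.
Qed.

Lemma stepA (U : {vspace V}) u z1 a1 b1 z2 :
  subalg br U -> u \in U -> u != 0 -> z1 \notin U -> br u z1 = a1 *: z1 + b1 *: u ->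
  z2 \notin U -> mu_alg br (gen br u z2) ->
  (forall w, w \notin U -> \dim (gen br u w) = 2%N \/ mu_alg br (gen br u w)) -> False.
Proof.
move=> hU hu u0 hz1 e1 hz2 hM hyp.
set M := gen br u z2 in hM.
have huM : u \in M := gen_u br u z2.
have hz2M : z2 \in M := gen_z br u z2.
have sM : subalg br M by move=> x y hx hy; apply: (gen_subalg hL hx hy).
have bp := bprime hL hM huM u0.
have z1M : z1 \notin M.
  apply/negP => h; apply: (bp z1 h (notin_line hu hz1)).
  by apply: Pz_mem; exists a1, b1.
have [m [hm hmu hw]] : exists m, [/\ m \in M, m \notin <[u]>%VS & z1 + m \notin U].
  case: (boolP (z1 + z2 \in U)) => h12; last by exists z2; split=> //; apply: notin_line hu hz2.
  have : ~~ (M <= <[u]> + <[z2]>)%VS.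
    apply/negP => s; have := dimvS s; rewrite (dim2 u0 (notin_line hu hz2)).
    by have := mu_dim3 hL hM; case: (\dim M) => [|[|[|]]].
  move/subvPn => [m' hm' hm'n]; exists m'; split=> //.
    by apply: contra hm'n; apply: (subvP (addvSl _ _)).
  apply/negP => h; apply/negP: hm'n; apply/negPn.
  have hd : m' - z2 \in U.
    by have := memvB h h12; rewrite opprD addrACA subrr add0r.
  have hdM : m' - z2 \in M by apply: memvB.
  have := capU hU hu u0 hz2 hM hdM hd => hl.
  by rewrite -(subrK z2 m'); apply: memv_add => //; apply: memv_line.
set w := z1 + m in hw.
have ebm : br u m = br u w - br u z1 by rewrite /w (brDr hL) addrC addKr.
have uw : u \in gen br u w := gen_u br u w.
case: (hyp w hw) => [d2|muw].
- have [a [b ew]] := Pz_of_dim2 hu u0 hw d2.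
  case: (eqVneq a a1) => [eaa|neaa].
  + apply: (bp m hm hmu); rewrite ebm ew e1 /w eaa idA1.
    by rewrite addrC; apply: memv_add; apply: memvZ; apply: memv_line.
  + apply/negP: z1M; apply/negPn.
    have : (a - a1) *: z1 \in M.
      rewrite (idA2 a a1 b b1 z1 m u) -[a *: (z1 + m) + _ - _]/(a *: w + b *: u - (a1 *: z1 + b1 *: u)).
      rewrite -ew -e1 -ebm.
      by apply: memvB; [apply: memvB; [apply: sM|apply: memvZ]|apply: memvZ].
    by move/(memvZ (a - a1)^-1); rewrite scalerA mulVf ?scale1r // subr_eq0.
- set M' := gen br u w in muw uw.
  set v := br u m - a1 *: m.
  have vM : v \in M by apply: memvB; [apply: sM | apply: memvZ].
  have vM' : v \in M'.
    have -> : v = br u w - a1 *: w - b1 *: u.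
      by rewrite /v ebm e1 /w idA3.
    have wM' : w \in M' := gen_z br u w.
    apply: memvB; [apply: memvB; [apply: (gen_subalg hL) | apply: memvZ] | apply: memvZ] => //.
  have vu : v \notin <[u]>%VS.
    apply/negP => /vlineP [k ek]; apply: (bp m hm hmu).
    have -> : br u m = a1 *: m + k *: u by rewrite -ek /v addrC subrK.
    by rewrite addrC; apply: memv_add; apply: memvZ; apply: memv_line.
  set T := (M :&: M')%VS.
  have sT : subalg br T.
    move=> x y /memv_capP [xM xM'] /memv_capP [yM yM']; rewrite memv_cap.
    by rewrite (sM _ _ xM yM) (gen_subalg hL xM' yM').
  have dT : (2 <= \dim T)%N.
    rewrite -(dim2 u0 vu); apply: dimvS; rewrite subv_add -!memvE !memv_cap.
    by rewrite huM uw vM vM'.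
  have eTM := mu_big hM sT (capvSl _ _) dT.
  have eTM' := mu_big muw sT (capvSr _ _) dT.
  apply/negP: z1M; apply/negPn.
  have : z1 = w - m by rewrite /w addrK.
  move=> ->; rewrite -eTM eTM'; apply: memvB => //.
    exact: gen_z.
  by rewrite -eTM' eTM.
Qed.

Lemma K1 (U : {vspace V}) u z1 a1 b1 c y a2 b2 : subalg br U -> u \in U -> z1 \notin U ->
  br u z1 = a1 *: z1 + b1 *: u -> c != 0 -> y \in U ->
  br u (c *: z1 + y) = a2 *: (c *: z1 + y) + b2 *: u -> a2 = a1.
Proof.
move=> hU hu hz1 e1 c0 hy e2; apply/eqP; apply/negPn/negP => ne.
apply/negP: hz1; apply/negPn.
have E : a2 *: (c *: z1 + y) + b2 *: u = c *: (a1 *: z1 + b1 *: u) + br u y.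
  by rewrite -e2 (brDr hL) (brZr hL) e1.
have := idK1 E => e.
have : (c * (a2 - a1)) *: z1 \in U.
  rewrite e; apply: memvB; [apply: memvB; [apply: memvD; [apply: memvZ; apply: memvZ|apply: hU]|apply: memvZ]|apply: memvZ] => //.
move/(memvZ (c * (a2 - a1))^-1); rewrite scalerA mulVf ?scale1r //.
by rewrite mulf_neq0 // subr_eq0.
Qed.

Lemma K2 (U : {vspace V}) u z1 a1 b1 z2 a2 b2 : subalg br U -> u \in U ->
  (forall z, z \notin U -> Pz u z) -> z1 \notin U -> z2 \notin U ->
  br u z1 = a1 *: z1 + b1 *: u -> br u z2 = a2 *: z2 + b2 *: u -> a1 = a2.
Proof.
move=> hU hu hP hz1 hz2 e1 e2.
case: (boolP (z1 + z2 \in U)) => h12.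
  have e : z2 = (-1) *: z1 + (z1 + z2) by rewrite scaleN1r addKr.
  have c0 : (-1 : F) != 0 by rewrite oppr_eq0 oner_eq0.
  have e2' : br u ((-1) *: z1 + (z1 + z2)) = a2 *: ((-1) *: z1 + (z1 + z2)) + b2 *: u.
    by rewrite -e.
  exact: esym (K1 hU hu hz1 e1 c0 h12 e2').
have [a3 [b3 e3]] := hP _ h12.
have E : a1 *: z1 + b1 *: u + (a2 *: z2 + b2 *: u) = a3 *: (z1 + z2) + b3 *: u.
  by rewrite -e1 -e2 -e3 (brDr hL).
have e := idK2 E.
have eY : (a2 - a3) *: z2 = (b3 - b1 - b2) *: u - (a1 - a3) *: z1.
  by rewrite e opprD opprK addrCA subrr addr0.
case: (eqVneq a1 a3) => [e13|n13].
  case: (eqVneq a2 a3) => [e23|n23]; first by rewrite e13 e23.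
  exfalso; apply/negP: hz2; apply/negPn.
  have : (a2 - a3) *: z2 \in U.
    rewrite eY e13 subrr scale0r subr0; exact: memvZ.
  by move/(memvZ (a2 - a3)^-1); rewrite scalerA mulVf ?scale1r // subr_eq0.
set c' := (a1 - a3)^-1 * (a2 - a3).
set y := (a1 - a3)^-1 *: ((b3 - b1 - b2) *: u).
have n13' : a1 - a3 != 0 by rewrite subr_eq0.
have hy : y \in U by apply: memvZ; apply: memvZ.
have ez1 : z1 = (- c') *: z2 + y.
  rewrite -[z1 in LHS]scale1r -(mulVf n13') -scalerA e scalerDr scalerN scalerA.
  by rewrite scaleNr.
have c0 : - c' != 0.
  apply/negP => /eqP h; move: hz1; rewrite ez1 h scale0r add0r.
  by rewrite hy.
have e1' : br u ((- c') *: z2 + y) = a1 *: ((- c') *: z2 + y) + b1 *: u by rewrite -ez1.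
exact: (K1 hU hu hz2 e2 c0 hy e1').
Qed.


Lemma scal_lem (U : {vspace V}) u z0 : subalg br U -> u \in U -> z0 \notin U ->
  (forall z, z \notin U -> Pz u z) -> exists l, forall z, br u z - l *: z \in <[u]>%VS.
Proof.
move=> hU hu hz0 hP; have [l [b0 e0]] := hP _ hz0; exists l.
have hout : forall z, z \notin U -> br u z - l *: z \in <[u]>%VS.
  move=> z hz; have [a [b e]] := hP _ hz.
  have ea := K2 hU hu hP hz0 hz e0 e.
  by rewrite e -ea addKr'; apply: memvZ; apply: memv_line.
move=> z; case: (boolP (z \in U)) => hz; last exact: hout.
have hzz : z + z0 \notin U.
  apply: contra hz0 => h; have := memvB h hz; by rewrite addKr'.
have := memvB (hout _ hzz) (hout _ hz0).
by rewrite (brDr hL) scalerDr idS.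
Qed.

Lemma lam_nz (U : {vspace V}) u l : core_free br U -> u \in U -> u != 0 ->
  (forall z, br u z - l *: z \in <[u]>%VS) -> l != 0.
Proof.
move=> hcf hu u0 hs; apply/negP => /eqP l0.
have id : ideal br <[u]>%VS.
  move=> x y /vlineP [k ->]; rewrite (brZr hL) (brC hL); apply: memvZ; rewrite memvN.
  by have := hs x; rewrite l0 scale0r subr0.
have := hcf _ id; rewrite -memvE => /(_ hu) e.
by move: (memv_line u); rewrite e memv0 (negbTE u0).
Qed.

End Steps.

Definition adsh (F : fieldType) (V : vectType F) (br : V -> V -> V) (hL : is_lie br)
  (u : V) (l : F) (x : V) := br u x - l *: x.

Lemma adsh_lin (F : fieldType) (V : vectType F) (br : V -> V -> V) (hL : is_lie br) u l :
  linear (adsh hL u l).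
Proof.
move=> a x y; rewrite /adsh (brlinr hL) scalerDr !scalerA mulrC -scalerA.
by rewrite idL.
Qed.

HB.instance Definition _ (F : fieldType) (V : vectType F) (br : V -> V -> V) (hL : is_lie br) (u : V) (l : F) := GRing.isSemilinear.Build F V V _ (@adsh F V br hL u l)
  (GRing.semilinear_linear (@adsh_lin F V br hL u l)).

Section StepB.
Variables (F : fieldType) (V : vectType F) (br : V -> V -> V).
Hypothesis hL : is_lie br.

Lemma adshE u l x : linfun (adsh hL u l) x = br u x - l *: x.
Proof. by rewrite lfunE. Qed.

Lemma stepB (U : {vspace V}) u1 l u2 z : subalg br U -> u1 \in U -> u1 != 0 -> l != 0 ->
  (forall x, br u1 x - l *: x \in <[u1]>%VS) -> (forall z, z \notin U -> Pz br u1 z) ->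
  u2 \in U -> u2 != 0 -> z \notin U -> mu_alg br (gen br u2 z) -> False.
Proof.
move=> hU hu1 u10 l0 hs hP hu2 u20 hz hM.
set M := gen br u2 z in hM.
have sM : subalg br M by move=> x y hx hy; apply: (gen_subalg hL hx hy).
have hu2M : u2 \in M := gen_u br u2 z.
have hzM : z \in M := gen_z br u2 z.
have u1M : u1 \notin M.
  apply/negP => h; have := capU hL hU hu2 u20 hz hM h hu1 => /vlineP [c ec].
  have c0 : c != 0 by apply: contra u10 => /eqP c0; rewrite ec c0 scale0r.
  apply: (bprime hL hM hu2M u20 hzM (notin_line hu2 hz)).
  have [a [b e]] := hP _ hz.
  have -> : br u2 z = c^-1 *: br u1 z by rewrite ec (brZl hL) scalerA mulVf ?scale1r.
  rewrite e; apply: memvZ; rewrite addrC; apply: memv_add; apply: memvZ => //.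
    by rewrite ec; apply: memvZ; apply: memv_line.
  exact: memv_line.
set g := linfun (adsh hL u1 l).
set T := (M :&: lker g)%VS.
have dimg : (\dim (g @: M)%VS <= 1)%N.
  have : (g @: M <= <[u1]>)%VS.
    by apply/subvP => y /memv_imgP [x _ ->]; rewrite adshE.
  by move/dimvS; rewrite dim_vline u10.
have dT : (2 <= \dim T)%N.
  have := limg_ker_dim g M; have := mu_dim3 hL hM; rewrite /T.
  move: (\dim (M :&: lker g)%VS) (\dim (g @: M)%VS) dimg => p q hq h3 e.
  rewrite -e in h3; case: q hq h3 {e} => [|[|//]] _ h3.
    by apply: ltnW; rewrite addn0 in h3.
  by rewrite addn1 in h3.
have memT : forall n, n \in T -> n \in M /\ br u1 n = l *: n.
  move=> n /memv_capP [nM]; rewrite memv_ker adshE subr_eq0 => /eqP ->; by [].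
have comm : forall n m, n \in T -> m \in T -> br n m = 0.
  move=> n m /memT [nM en] /memT [mM em].
  have J := jacobi hL u1 n m.
  rewrite (brC hL m u1) em (brNr hL) (brZr hL) en (brZr hL) (brC hL m n) scalerN in J.
  have e2 : br u1 (br n m) - l *: br n m = l *: br n m.
    by move: J; rewrite -!addrA => /eqP; rewrite addr_eq0 => /eqP ->; rewrite opprD !opprK addrK.
  have := hs (br n m); rewrite e2 => /vlineP [k ek].
  have k0 : k = 0.
    apply/eqP; apply/negPn/negP => k0; apply/negP: u1M; apply/negPn.
    have : k *: u1 \in M by rewrite -ek; apply: memvZ; apply: sM.
    by move/(memvZ k^-1); rewrite scalerA mulVf ?scale1r.
  by move: ek; rewrite k0 scale0r => /eqP; rewrite scaler_eq0 (negbTE l0) => /eqP.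
have sT : subalg br T by move=> x y hx hy; rewrite comm ?mem0v.
have eT := mu_big hM sT (capvSl _ _) dT.
apply: hM.1; exists 1%N; rewrite /derived /=; apply/eqP; rewrite -subv0.
by apply: brk_sub => a b; rewrite -eT => ha hb; rewrite comm ?mem0v.
Qed.

End StepB.

Definition rowc (F : fieldType) (V : vectType F) (X : 3.-tuple V) (x : V) : 'rV[F]_3 :=
  \row_j coord X j x.
Lemma rowc_lin (F : fieldType) (V : vectType F) (X : 3.-tuple V) : linear (rowc X).
Proof. by move=> a x y; apply/rowP=> i; rewrite !mxE linearP. Qed.
HB.instance Definition _ (F : fieldType) (V : vectType F) (X : 3.-tuple V) :=
  GRing.isSemilinear.Build F V 'rV[F]_3 _ (rowc X) (GRing.semilinear_linear (rowc_lin X)).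

Section KK.
Variable F : fieldType.
Local Notation Ka := (Ka F). Local Notation Kb := (Kb F). Local Notation Kc := (Kc F).

Lemma Ka_E j : Ka ord0 j = ((j : nat) == 0%N)%:R. Proof. by rewrite mxE. Qed.

Ltac kb := apply/rowP => j; rewrite /Kbr !mxE /= ?(mul1r, mul0r, mulr0, mulr1, subr0, sub0r, oppr0, add0r, addr0, mulN1r, subrr, scale0r, scaler0, scaleN1r, mxE).
Lemma KbrAB : Kbr Ka Kb = Kc. Proof. by kb. Qed.
Lemma KbrBA : Kbr Kb Ka = - Kc. Proof. by kb. Qed.
Lemma KbrAC : Kbr Ka Kc = Ka. Proof. by kb. Qed.
Lemma KbrCA : Kbr Kc Ka = - Ka. Proof. by kb. Qed.
Lemma KbrBC : Kbr Kb Kc = Kb. Proof. by kb. Qed.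
Lemma KbrCB : Kbr Kc Kb = - Kb. Proof. by kb. Qed.
Lemma KbrAA : Kbr Ka Ka = 0. Proof. by kb. Qed.
Lemma KbrBB : Kbr Kb Kb = 0. Proof. by kb. Qed.
Lemma KbrCC : Kbr Kc Kc = 0. Proof. by kb. Qed.
End KK.

Section Cls.
Variables (F : fieldType) (V : vectType F) (br : V -> V -> V).
Hypothesis hL : is_lie br.
Add Ring FringC : (Fth F).

Lemma KbrL a (x y z : 'rV[F]_3) : Kbr (a *: x + y) z = a *: Kbr x z + Kbr y z.
Proof. rewrite /Kbr !mxE; vring F [:: Ka F; Kb F; Kc F]. Qed.
Lemma KbrR a (x y z : 'rV[F]_3) : Kbr z (a *: x + y) = a *: Kbr z x + Kbr z y.
Proof. rewrite /Kbr !mxE; vring F [:: Ka F; Kb F; Kc F]. Qed.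

Definition lin1 (W : lmodType F) (g : V -> V -> W) :=
  forall a x y z, g (a *: x + y) z = a *: g x z + g y z.
Definition lin2 (W : lmodType F) (g : V -> V -> W) :=
  forall a x y z, g z (a *: x + y) = a *: g z x + g z y.

Lemma lin1_sum (W : lmodType F) (g : V -> V -> W) n (c : 'I_n -> F) (v : 'I_n -> V) z :
  lin1 g -> g (\sum_i c i *: v i) z = \sum_i c i *: g (v i) z.
Proof.
move=> hg; have g0 : g 0 z = 0.
  have := hg 1 0 0 z; rewrite !scale1r addr0 => H.
  by apply: (@addrI _ (g 0 z)); rewrite addr0 -H.
elim/big_rec2: _ => [//|i y1 y2 _ <-]; exact: hg.
Qed.
Lemma lin2_sum (W : lmodType F) (g : V -> V -> W) n (c : 'I_n -> F) (v : 'I_n -> V) z :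
  lin2 g -> g z (\sum_i c i *: v i) = \sum_i c i *: g z (v i).
Proof.
move=> hg; have g0 : g z 0 = 0.
  have := hg 1 0 0 z; rewrite !scale1r addr0 => H.
  by apply: (@addrI _ (g z 0)); rewrite addr0 -H.
elim/big_rec2: _ => [//|i y1 y2 _ <-]; exact: hg.
Qed.

Lemma bil_ext (W : lmodType F) (g h : V -> V -> W) (X : seq V) :
  (forall x, x \in <<X>>%VS) -> lin1 g -> lin2 g -> lin1 h -> lin2 h ->
  (forall x y, x \in X -> y \in X -> g x y = h x y) -> forall x y, g x y = h x y.
Proof.
move=> hX l1g l2g l1h l2h hb x y.
have ey : forall v, v \in X -> g v y = h v y.
  move=> v hv; rewrite (coord_span (X := in_tuple X) (hX y)).
  rewrite (lin2_sum _ _ _ l2g) (lin2_sum _ _ _ l2h); apply: eq_bigr => i _.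
  by rewrite hb // mem_nth // size_tuple.
rewrite (coord_span (X := in_tuple X) (hX x)).
rewrite (lin1_sum _ _ _ l1g) (lin1_sum _ _ _ l1h); apply: eq_bigr => i _.
by rewrite ey // mem_nth // size_tuple.
Qed.


Lemma neg2 (W : lmodType F) (r : W) : (1 + 1 : F) = 0 -> - r = r.
Proof.
move=> h; apply/eqP; rewrite eq_sym -subr_eq0 opprK -{1}[r]scale1r -{2}[r]scale1r.
by rewrite -scalerDl h scale0r.
Qed.

Lemma classify (U : {vspace V}) u : subalg br U -> u \in U -> u != 0 ->
  (forall z, br u z - z \in <[u]>%VS) ->
  (forall y, y \in U -> y != 0 -> exists2 l, l != 0 & forall z, br y z - l *: z \in <[y]>%VS) ->
  almost_abelian br \/ ((2 \in [pchar F])%N /\ exists f : 'Hom(V, 'rV[F]_3),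
        [/\ lker f = 0%VS, limg f = fullv,
            (forall x y, f (br x y) = Kbr (f x) (f y)) &
            (f @: U)%VS = <[Kc F]>%VS]).
Proof.
move=> hU hu u0 hs1 hU1.
set g := linfun (adsh hL u 1); set N := lker g.
have memN : forall n, (n \in N) = (br u n == n).
  by move=> n; rewrite memv_ker adshE scale1r subr_eq0.
have eN : forall n, n \in N -> br u n = n by move=> n; rewrite memN => /eqP.
have dec : forall z, exists b, z + b *: u \in N.
  move=> z; have /vlineP [b eb] := hs1 z; exists b.
  rewrite memN (brDr hL) (brZr hL) (brxx hL) scaler0 addr0 -eb addrC subrK.
  by [].
have uN : forall k, k *: u \in N -> k *: u = 0.
  by move=> k; rewrite memN (brZr hL) (brxx hL) scaler0 eq_sym => /eqP.
have NU : forall y, y \in N -> y \in U -> y = 0.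
  move=> y yN yU; apply/eqP; apply/negPn/negP => y0.
  have [l l0 hl] := hU1 y yU y0.
  have hyu := eN y yN.
  have := hl u; rewrite (brC hL y u) hyu => /vlineP [k ek].
  have e2 : l *: u = - (k *: y) - y by apply: (use_eqN ek); vring F [:: y; u].
  have : u \in <[y]>%VS.
    rewrite -[u]scale1r -(mulVf l0) -scalerA e2; apply: memvZ.
    by apply: memvB; [rewrite memvN|]; do ?apply: memvZ; apply: memv_line.
  move/vlineP => [k' ek']; move: hyu; rewrite ek' (brZl hL) (brxx hL) scaler0.
  by move/esym/eqP; rewrite (negbTE y0).
have Uu : U = <[u]>%VS.
  apply: subv_anti; apply/andP; split; last by rewrite -memvE.
  apply/subvP => x xU; have [b hb] := dec x.
  have e := NU _ hb (memvD xU (memvZ b hu)).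
  have -> : x = (- b) *: u by rewrite scaleNr; apply/eqP; rewrite -addr_eq0 e.
  by apply: memvZ; apply: memv_line.
have NN : forall n m, n \in N -> m \in N -> exists c, br n m = c *: u /\ c + c = 0.
  move=> n m nN mN; have en := eN n nN; have em := eN m mN.
  have J := jacobi hL u n m.
  rewrite (brC hL m u) em (brNr hL) en (brC hL m n) in J.
  have e2 : br u (br n m) = br n m + br n m.
    by apply: (use_eq J); vring F [:: br u (br n m); br n m].
  have /vlineP [c ec] := hs1 (br n m).
  have eY : br n m = c *: u by rewrite -ec e2 addKr'.
  exists c; split => //.
  have : br u (c *: u) = 0 by rewrite (brZr hL) (brxx hL) scaler0.
  rewrite -eY e2 eY -scalerDl => /eqP; rewrite scaler_eq0 (negbTE u0) orbF.
  by move/eqP.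
have Ncap : (N :&: <[u]> = 0)%VS.
  apply/eqP; rewrite -subv0; apply/subvP => w /memv_capP [wN /vlineP [k ek]].
  by rewrite memv0 ek; apply/eqP; apply: uN; rewrite -ek.
have NL : (N + <[u]> = fullv)%VS.
  apply: subv_anti; rewrite subvf /=; apply/subvP => z _; have [b hb] := dec z.
  rewrite -(addrK (b *: u) z); apply: memv_add => //.
  by rewrite memvN; apply: memvZ; apply: memv_line.
case: (classic (forall n m, n \in N -> m \in N -> br n m = 0)) => [comm|ncomm].
- left.
  have eL : brk br fullv fullv = N.
    apply: subv_anti; apply/andP; split.
    + apply: brk_sub => x y _ _; have [a ha] := dec x; have [b hb] := dec y.
      have ex : x = (x + a *: u) - a *: u by rewrite addrK.
      have ey : y = (y + b *: u) - b *: u by rewrite addrK.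
      move: (x + a *: u) (y + b *: u) ex ey ha hb => n1 n2 -> -> h1 h2.
      have e : br (n1 - a *: u) (n2 - b *: u) = b *: n1 - a *: n2.
        rewrite (brBl hL) !(brBr hL) !(brZl hL) !(brZr hL) (brxx hL) (brC hL n1 u).
        rewrite (eN _ h1) (eN _ h2) comm //; vring F [:: n1; n2].
      by rewrite e; apply: memvB; apply: memvZ.
    + apply/subvP => n nN; rewrite -(eN n nN); apply: (mem_brk hL); apply: memvf.
  exists u; split.
  + by rewrite eL.
  + by rewrite eL.
  + by move=> y w; rewrite eL; exact: comm.
  + by move=> y; rewrite eL; exact: eN.
- right.
  have [n [m [nN mN nm0]]] : exists n m, [/\ n \in N, m \in N & br n m != 0].
    apply: NNPP => H; apply: ncomm => n m nN mN; apply/eqP; apply/negPn/negP => h.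
    by apply: H; exists n, m; split.
  have [c [ec cc]] := NN n m nN mN.
  have c0 : c != 0 by apply: contra nm0 => /eqP c0; rewrite ec c0 scale0r.
  have two : (1 + 1 : F) = 0.
    by apply/eqP; move: cc => /eqP; rewrite -{1 2}[c]mul1r -mulrDl mulf_eq0 (negbTE c0) orbF.
  split; first by rewrite inE /=; apply/eqP; rewrite -two.
  set m' := c^-1 *: m.
  have m'N : m' \in N by apply: memvZ.
  have enm : br n m' = u by rewrite /m' (brZr hL) ec scalerA mulVf ?scale1r.
  have en := eN n nN; have em := eN m' m'N.
  have n0 : n != 0 by apply: contra nm0 => /eqP ->; rewrite (br0l hL).
  have m'n : m' \notin <[n]>%VS.
    apply/negP => /vlineP [k ek]; move: enm; rewrite ek (brZr hL) (brxx hL) scaler0.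
    by move/esym/eqP; rewrite (negbTE u0).
  have Nsp : forall p, p \in N -> p \in (<[n]> + <[m']>)%VS.
    move=> p pN; have [al [eal _]] := NN m' p m'N pN; have [be [ebe _]] := NN p n pN nN.
    have J := jacobi hL n m' p.
    rewrite eal ebe enm !(brZr hL) (brC hL n u) (brC hL m' u) (brC hL p u) en em (eN p pN) in J.
    have ep : p = (- al) *: n + (- be) *: m' by apply: (use_eqN J); vring F [:: n; m'; p].
    by rewrite ep; apply: memv_add; apply: memvZ; apply: memv_line.
  pose X := [tuple n; m'; u].
  have Xn : n \in (X : seq V) by rewrite !inE eqxx.
  have Xm : m' \in (X : seq V) by rewrite !inE eqxx orbT.
  have Xu : u \in (X : seq V) by rewrite !inE eqxx !orbT.
  have spanX : forall x, x \in <<X>>%VS.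
    move=> x; have [b hb] := dec x.
    have := Nsp _ hb => /memv_addP [p1 /vlineP [k1 e1] [p2 /vlineP [k2 e2] e12]].
    have -> : x = k1 *: n + k2 *: m' - b *: u by rewrite -e1 -e2 -e12 addrK.
    by apply: memvB; [apply: memvD|]; apply: memvZ; apply: memv_span.
  have dim3 : (3 <= \dim (fullv : {vspace V}))%N.
    have := dimv_sum_cap N <[u]>; rewrite NL Ncap dimv0 addn0 dim_vline u0 => ->.
    rewrite addn1 ltnS -(dim2 n0 m'n); apply: dimvS.
    by rewrite subv_add -!memvE nN m'N.
  have bX : basis_of fullv X.
    by rewrite basisEdim size_tuple dim3 andbT; apply/subvP => x _; exact: spanX.
  have fX : free X := basis_free bX.
  set f := linfun (rowc X).
  have fE : forall x, f x = \row_j coord X j x by move=> x; rewrite lfunE.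
  have fXi : forall i : 'I_3, f X`_i = \row_j (i == j)%:R.
    by move=> i; rewrite fE; apply/rowP => j; rewrite !mxE coord_free.
  have fn : f n = Ka F.
    rewrite -[n]/(X`_i0) fXi; apply/rowP => j; rewrite !mxE.
    by rewrite -val_eqE /= eq_sym.
  have fm : f m' = Kb F.
    rewrite -[m']/(X`_i1) fXi; apply/rowP => j; rewrite !mxE.
    by rewrite -val_eqE /= eq_sym.
  have fu : f u = Kc F.
    rewrite -[u]/(X`_i2) fXi; apply/rowP => j; rewrite !mxE.
    by rewrite -val_eqE /= eq_sym.
  have ker0 : lker f = 0%VS.
    apply/eqP; rewrite -subv0; apply/subvP => x; rewrite memv_ker memv0 => /eqP fx0.
    have cj : forall j, coord X j x = 0.
      by move=> j; have := congr1 (fun r : 'rV[F]_3 => r 0 j) fx0; rewrite fE !mxE.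
    by rewrite (coord_span (spanX x)) big1 // => j _; rewrite cj scale0r.
  exists f; split => //.
  - apply/eqP; rewrite eqEdim subvf /=.
    have := limg_ker_dim f fullv; rewrite ker0 capv0 dimv0 add0n => ->.
    by rewrite dimvf.
  - have fN : forall x, f (- x) = - f x by move=> x; rewrite linearN.
    pose X' := (X : seq V).
    have := @bil_ext _ (fun x y => f (br x y)) (fun x y => Kbr (f x) (f y)) X' spanX.
    apply.
    + by move=> a x y z; rewrite /= (brlin hL) linearP.
    + by move=> a x y z; rewrite /= (brlinr hL) linearP.
    + by move=> a x y z; rewrite /= linearP KbrL.
    + by move=> a x y z; rewrite /= linearP KbrR.
    + move=> x y; rewrite /X' !inE => /or3P [] /eqP -> /or3P [] /eqP ->.
      all: rewrite ?(brxx hL) ?linear0 ?fn ?fm ?fu ?KbrAA ?KbrBB ?KbrCC //.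
      all: rewrite ?enm ?(brC hL n u) ?(brC hL m' u) ?(brC hL m' n) ?en ?em ?enm.
      all: rewrite ?fN ?fn ?fm ?fu ?KbrAB ?KbrBA ?KbrAC ?KbrCA ?KbrBC ?KbrCB.
      all: rewrite ?(neg2 _ two).
      all: try done.
  - by rewrite Uu limg_line fu.
Qed.
End Cls.

Unset Implicit Arguments.

Theorem lemma3p3 (F : fieldType) (V : vectType F) (br : V -> V -> V)
    (hL : is_lie br) (U : {vspace V}) (hU : subalg br U)
    (hcf : core_free br U)
    (hyp : forall u z : V, u \in U -> u != 0 -> z \notin U ->
       \dim (gen br u z) = 2%N \/ mu_alg br (gen br u z)) :
  [\/ almost_abelian br,
      (forall u z : V, u \in U -> u != 0 -> z \notin U -> mu_alg br (gen br u z))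
    | (2 \in [pchar F])%N /\
      exists f : 'Hom(V, 'rV[F]_3),
        [/\ lker f = 0%VS, limg f = fullv,
            (forall x y, f (br x y) = Kbr (f x) (f y)) &
            (f @: U)%VS = <[Kc F]>%VS]].
Proof.
case: (classic (forall u z, u \in U -> u != 0 -> z \notin U -> mu_alg br (gen br u z))) => [H|H].
  by apply: Or32.
have [u0 [z0 [hu0 [u00 [hz0 nmu]]]]] : exists u z, u \in U /\ u != 0 /\ z \notin U /\
    ~ mu_alg br (gen br u z).
  apply: NNPP => H'; apply: H => u z hu u0 hz; apply: NNPP => nm; apply: H'.
  by exists u, z.
have Pz0 : Pz br u0 z0.
  by case: (hyp u0 z0 hu0 u00 hz0) => [d|m]; [exact: (Pz_of_dim2 hL hu0 u00 hz0 d)|].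
have [a1 [b1 e1]] := Pz0.
have allP0 : forall z, z \notin U -> Pz br u0 z.
  move=> z hz; case: (hyp u0 z hu0 u00 hz) => [d|m]; first exact: (Pz_of_dim2 hL hu0 u00 hz d).
  exfalso; apply: (stepA hL hU hu0 u00 hz0 e1 hz m).
  by move=> w hw; exact: hyp.
have [l0 hl0] := scal_lem hL hU hu0 hz0 allP0.
have l00 := lam_nz hL hcf hu0 u00 hl0.
have allP : forall u z, u \in U -> u != 0 -> z \notin U -> Pz br u z.
  move=> u z hu un0 hz; case: (hyp u z hu un0 hz) => [d|m]; first exact: (Pz_of_dim2 hL hu un0 hz d).
  exfalso; exact: (stepB hL hU hu0 u00 l00 hl0 allP0 hu un0 hz m).
have hU1 : forall y, y \in U -> y != 0 ->
    exists2 l, l != 0 & forall z, br y z - l *: z \in <[y]>%VS.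
  move=> y hy y0; have [l hl] := scal_lem hL hU hy hz0 (fun z hz => allP y z hy y0 hz).
  by exists l => //; exact: (lam_nz hL hcf hy y0 hl).
set u := l0^-1 *: u0.
have hu : u \in U by apply: memvZ.
have u0' : u != 0 by rewrite scaler_eq0 invr_eq0 negb_or l00 u00.
have lu : (<[u0]> <= <[u]>)%VS.
  rewrite -memvE; have -> : u0 = l0 *: u by rewrite /u scalerA mulfV ?scale1r.
  by apply: memvZ; apply: memv_line.
have hs1 : forall z, br u z - z \in <[u]>%VS.
  move=> z; have -> : br u z - z = l0^-1 *: (br u0 z - l0 *: z).
    by rewrite /u (brZl hL) scalerBr scalerA mulVf ?scale1r.
  by apply: memvZ; apply: (subvP lu).
case: (classify hL hU hu u0' hs1 hU1) => [h|h]; [exact: Or31|exact: Or33].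
Qed.
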